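(* Let $\zeta>0$ and let $G=(\mathcal{Y},E,f)$ be a curl consistent weighted digraph. Then there exists a weighted digraph $G'=(\mathcal{Y}\cup\mathcal{Y}',E',f')$ with $\mathcal{Y}'\cap\mathcal{Y}=\emptyset$ and $E\cap E'=\emptyset$ such that (1) for every $e=(C^{(i)},C^{(j)})\in E$, the synthetic expert between $C^{(i)}$ and $C^{(j)}$ in $G'$ is $\zeta$-accurate and $f(e)$ lies in its bound interval $(L_{G'}(i,j),U_{G'}(i,j))$; and (2) $G'$ is curl consistent.
   Context: A weighted digraph $H=(V,E_H,h)$ has $E_H$ a set of ordered pairs of distinct vertices and $h:E_H\to\mathbb{R}$, extended by $h(b,a)=1-h(a,b)$; edges may be traversed in either direction with this convention. A cycle is a sequence of $\ell\ge3$ pairwise distinct vertices $(c_1,\dots,c_\ell)$ with consecutive pairs and $(c_\ell,c_1)$ edges (either direction); its curl is $h(c_\ell,c_1)+\sum_{t<\ell}h(c_t,c_{t+1})$. $H$ is curl consistent if every cycle of length $\ell$ has curl strictly between $1$ and $\ell-1$. A path is a sequence of pairwise distinct vertices with consecutive pairs edges; its weight $W(H,B)$ is the sum of $h$ over its consecutive pairs. For vertices $a,b$ with neither $(a,b)$ nor $(b,a)$ an edge of $H$, let $U_H(a,b)=\min W(H,B)$ over paths $B$ from $a$ to $b$ and $L_H(a,b)=1-\min W(H,\overline{B})$ over paths $\overline{B}$ from $b$ to $a$ (minimum over the empty set is $+\infty$); the synthetic expert between $a$ and $b$ is called $\zeta$-accurate if $U_H(a,b)-L_H(a,b)\le\zeta$,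 i.e. its bound interval is contained in $(L,L+\zeta]$ for some $L$. *)

(* Defs.v *)
From HB Require Import structures.
From mathcomp Require Import all_boot all_order all_algebra.
Set Implicit Arguments. Unset Strict Implicit. Unset Printing Implicit Defensive.
Import Order.TTheory GRing.Theory Num.Theory.
Local Open Scope ring_scope.

(* A weighted digraph H = (V, E_H, h): a finite vertex list, a finite list of
   ordered edges, and a weight h; only the values of h on E_H matter. *)
Record wdigraph (T : eqType) (R : Type) := WDigraph {
  wverts : seq T;
  wedges : seq (T * T);
  wgt : T * T -> R }.

Section Defs.
Variables (R : numDomainType) (T : eqType).
Implicit Types (H : wdigraph T R).

(* Well-formedness: edges join distinct vertices of V, and no pair is an edge
   in both directions (so that h(b,a) := 1 - h(a,b) is consistent). *)
Definition wf H : Prop :=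
  forall a b, (a, b) \in wedges H ->
    [/\ a != b, a \in wverts H, b \in wverts H & (b, a) \notin wedges H].

Definition adj H (a b : T) : bool :=
  ((a, b) \in wedges H) || ((b, a) \in wedges H).

Definition hext H (a b : T) : R :=
  if (a, b) \in wedges H then wgt H (a, b) else 1 - wgt H (b, a).

Definition is_path H (a b : T) (s : seq T) : bool :=
  [&& uniq (a :: s), path (adj H) a s & last a s == b].

Definition pathW H (a : T) (s : seq T) : R :=
  \sum_(e <- zip (a :: s) s) hext H e.1 e.2.

Definition is_wcycle H (c : seq T) : bool :=
  [&& (3 <= size c)%N, uniq c & cycle (adj H) c].

Definition curl H (c : seq T) : R :=
  \sum_(e <- zip c (rot 1 c)) hext H e.1 e.2.

Definition curl_consistent H : Prop :=
  forall c, is_wcycle H c -> 1 < curl H c < (size c)%:R - 1.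

Definition min_pathW H (a b : T) (m : R) : Prop :=
  (exists s, is_path H a b s /\ pathW H a s = m) /\
  (forall s, is_path H a b s -> m <= pathW H a s).

Definition synth_defined H (a b : T) : Prop := ~~ adj H a b.

(* U_H(a,b) - L_H(a,b) <= zeta, with U_H(a,b) = min W over paths a -> b and
   L_H(a,b) = 1 - min W over paths b -> a (both finite) *)
Definition zeta_accurate H (a b : T) (zeta : R) : Prop :=
  exists U M, [/\ min_pathW H a b U, min_pathW H b a M & U - (1 - M) <= zeta].

Definition in_bound_interval H (a b : T) (y : R) : Prop :=
  exists U M, [/\ min_pathW H a b U, min_pathW H b a M & 1 - M < y < U].

End Defs.

(* Main.v *)
Require Import Defs.
From HB Require Import structures.
From mathcomp Require Import all_boot all_order all_algebra.
From mathcomp Require Import ring lra.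
Import Order.TTheory GRing.Theory Num.Theory.
Local Open Scope ring_scope.

Lemma pathW_nil (R : numDomainType) (Y : eqType) (H : wdigraph Y R) a :
  pathW H a [::] = 0.
Proof. by rewrite /pathW /= big_nil. Qed.

Lemma pathW_cons (R : numDomainType) (Y : eqType) (H : wdigraph Y R) a u s :
  pathW H a (u :: s) = hext H a u + pathW H u s.
Proof. by rewrite /pathW /= big_cons. Qed.

Lemma zip_cons_rcons (Y : Type) (a x : Y) s :
  zip (a :: s) (rcons s x) = rcons (zip (a :: s) s) (last a s, x).
Proof. by elim: s a => [|y s IH] a //=; rewrite IH. Qed.

Lemma zip_cons_rcons2 (Y : Type) (a x : Y) s :
  zip (a :: rcons s x) (rcons s x) = rcons (zip (a :: s) s) (last a s, x).
Proof. by elim: s a => [|y s IH] a //=; rewrite IH. Qed.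

Lemma pathW_rcons (R : numDomainType) (Y : eqType) (H : wdigraph Y R) a s x :
  pathW H a (rcons s x) = pathW H a s + hext H (last a s) x.
Proof. by rewrite /pathW zip_cons_rcons2 -cats1 big_cat big_seq1. Qed.

Lemma curl_cons (R : numDomainType) (Y : eqType) (H : wdigraph Y R) a s :
  curl H (a :: s) = pathW H a s + hext H (last a s) a.
Proof. by rewrite /curl rot1_cons zip_cons_rcons -cats1 big_cat big_seq1. Qed.

Lemma adjC (R : numDomainType) (Y : eqType) (H : wdigraph Y R) a b :
  adj H a b = adj H b a.
Proof. by rewrite /adj orbC. Qed.

Lemma hext_sum {R : numDomainType} {Y : eqType} {H : wdigraph Y R} {a b} :
  wf H -> adj H a b -> hext H a b + hext H b a = 1.
Proof.
move=> Hwf /orP[] E; rewrite /hext.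
- have [_ _ _ N] := Hwf _ _ E; rewrite E (negbTE N); ring.
- have [_ _ _ N] := Hwf _ _ E; rewrite E (negbTE N); ring.
Qed.

Lemma path_sub (R : numDomainType) (Y : eqType) (H : wdigraph Y R) x s :
  wf H -> path (adj H) x s -> {subset s <= wverts H}.
Proof.
move=> Hwf; elim: s x => [|y s IH] x //= /andP[Hxy Hp] z.
rewrite inE => /orP[/eqP ->|]; last exact: IH Hp z.
case/orP: Hxy => E; by have [] := Hwf _ _ E.
Qed.

Fixpoint allseq {Y : Type} (V : seq Y) n : seq (seq Y) :=
  if n is n'.+1 then [::] :: [seq x :: s | x <- V, s <- allseq V n'] else [:: [::]].

Lemma allseqP (Y : eqType) (V : seq Y) n s :
  {subset s <= V} -> (size s <= n)%N -> s \in allseq V n.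
Proof.
elim: n s => [|n IH] [|x s] Hs Hsz //=; rewrite ?inE //.
apply/orP; right.
apply: (allpairs_f (fun x s => x :: s)).
  by apply: Hs; rewrite inE eqxx.
apply: IH => // y Hy; apply: Hs; by rewrite inE Hy orbT.
Qed.

Lemma argmin (R : realDomainType) (Z : eqType) (F : Z -> R) (P : pred Z) (l : seq Z) :
  (exists x, x \in l /\ P x) ->
  exists x, [/\ x \in l, P x & forall y, y \in l -> P y -> F x <= F y].
Proof.
elim: l => [|z l IH] [x [xin Px]]; first by [].
have [hl|hl] := boolP (has P l).
- have [y yin Py] := hasP hl.
  have [m [min Pm Hm]] := IH (ex_intro _ y (conj yin Py)).
  case Hz: (P z && (F z <= F m)).
  + case/andP: Hz => Pz Hle.
    exists z; split => //; first by rewrite inE eqxx.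
    move=> w; rewrite inE => /orP[/eqP -> //|win Pw].
    exact: le_trans Hle (Hm w win Pw).
  + exists m; split => //; first by rewrite inE min orbT.
    move=> w; rewrite inE => /orP[/eqP ->|win Pw]; last exact: Hm.
    move=> Pz; move: Hz; rewrite Pz /= => /negbT; rewrite -ltNge; exact: ltW.
- move: xin; rewrite inE => /orP[/eqP Exz|xin]; last first.
    by move/hasPn: hl => /(_ x xin); rewrite Px.
  subst x; exists z; split => //; first by rewrite inE eqxx.
  move=> w; rewrite inE => /orP[/eqP -> //|win Pw].
  by move/hasPn: hl => /(_ w win); rewrite Pw.
Qed.

Lemma min_exists (R : realDomainType) (Y : eqType) (H : wdigraph Y R) a b s0 :
  wf H -> is_path H a b s0 -> exists m, min_pathW H a b m.
Proof.
move=> Hwf Hs0.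
have inl_ : forall s, is_path H a b s -> s \in allseq (wverts H) (size (wverts H)).
  move=> s /and3P[Hu Hp _]; apply: allseqP; first exact: path_sub Hp.
  apply: uniq_leq_size; first by case/andP: Hu.
  exact: path_sub Hp.
have [m [_ Pm Hm]] := @argmin _ _ (pathW H a) (is_path H a b) (allseq (wverts H) (size (wverts H)))
   (ex_intro _ s0 (conj (inl_ _ Hs0) Hs0)).
exists (pathW H a m); split; first by exists m.
move=> s Hs; exact: Hm (inl_ _ Hs) Hs.
Qed.

Definition eps {R : realFieldType} (zeta : R) : R :=
  if zeta <= 1 then zeta / 2 else 1 / 2.

Definition cw {R : realFieldType} (zeta : R) (n : nat) : R :=
  if odd n then 1 - eps zeta else eps zeta.

Lemma cw_bounds (R : realFieldType) (zeta : R) n : 0 < zeta -> 0 < cw zeta n < 1.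
Proof.
move=> Hz; rewrite /cw /eps; case: (boolP (zeta <= 1)) => h;
  case: (odd n); apply/andP; split; rewrite -?real_ltNge ?num_real // in h *; lra.
Qed.

Lemma eps_bounds (R : realFieldType) (zeta : R) : 0 < zeta -> eps zeta + eps zeta <= zeta.
Proof.
move=> Hz; rewrite /eps; case: (boolP (zeta <= 1)) => h;
  rewrite -?real_ltNge ?num_real // in h *; lra.
Qed.

Definition ed {R : Type} {T : eqType} (G : wdigraph T R) (n : nat) :=
  onth (wedges G) n./2.

Definition gad {R : Type} {T : eqType} (G : wdigraph T R) (n : nat) : seq ((T + nat) * (T + nat)) :=
  if ed G n is Some e then [:: (inl e.1, inr n); (inr n, inl e.2)] else [::].

Definition Edges' {R : Type} {T : eqType} (G : wdigraph T R) :=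
  flatten [seq gad G n | n <- iota 0 (size (wedges G)).*2].

Definition Y' {R : Type} {T : eqType} (G : wdigraph T R) : seq (T + nat) :=
  [seq inr n | n <- iota 0 (size (wedges G)).*2].

Definition wgt' {R : realFieldType} {T : eqType} (zeta : R) (G : wdigraph T R)
  (uv : (T + nat) * (T + nat)) : R :=
  match uv with
  | (inl _, inr n) => if ed G n is Some e then wgt G e + cw zeta n else 0
  | _ => 0
  end.

Definition G' {R : realFieldType} {T : eqType} (zeta : R) (G : wdigraph T R) :=
  WDigraph ([seq inl x | x <- wverts G] ++ Y' G) (Edges' G) (wgt' zeta G).

Lemma ed_lt {R : Type} {T : eqType} {G : wdigraph T R} {n e} :
  ed G n = Some e -> (n < (size (wedges G)).*2)%N.
Proof.
move=> E; rewrite -ltn_half_double; have := onthTE (wedges G) n./2.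
by rewrite /ed in E; rewrite E.
Qed.

Lemma ed_mem {R : Type} {T : eqType} {G : wdigraph T R} {n e} :
  ed G n = Some e -> e \in wedges G.
Proof. by move=> E; apply/onthP; exists n./2. Qed.

Lemma memE' (R : Type) (T : eqType) (G : wdigraph T R) u v :
  (u, v) \in Edges' G <->
  exists n p q, ed G n = Some (p, q) /\
    ((u = inl p /\ v = inr n) \/ (u = inr n /\ v = inl q)).
Proof.
split.
- move/flatten_mapP => [n _]; rewrite /gad.
  case E: (ed G n) => [[p q]|] //=; rewrite !inE => /orP[] /eqP [-> ->];
  exists n, p, q; split => //; [left|right]; done.
- move=> [n [p [q [E H]]]]; apply/flatten_mapP; exists n.
    by rewrite mem_iota add0n (ed_lt E).
  rewrite /gad E /=; case: H => [[-> ->]|[-> ->]]; by rewrite !inE eqxx ?orbT.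
Qed.

Lemma adj_ll {R : realFieldType} {T : eqType} (zeta : R) (G : wdigraph T R) a b :
  adj (G' zeta G) (inl a) (inl b) = false.
Proof.
rewrite /adj /=; apply/negbTE; rewrite negb_or; apply/andP; split; apply/negP;
  move/memE' => [n [p [q [_ [[_ H]|[H _]]]]]] //.
Qed.

Lemma adj_rr {R : realFieldType} {T : eqType} (zeta : R) (G : wdigraph T R) m n :
  adj (G' zeta G) (inr m) (inr n) = false.
Proof.
rewrite /adj /=; apply/negbTE; rewrite negb_or; apply/andP; split; apply/negP;
  move/memE' => [k [p [q [_ [[H _]|[_ H]]]]]] //.
Qed.

Lemma adj_lr {R : realFieldType} {T : eqType} (zeta : R) (G : wdigraph T R) a n :
  adj (G' zeta G) (inl a) (inr n) ->
  exists p q, ed G n = Some (p, q) /\ (a = p \/ a = q).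
Proof.
rewrite /adj /= => /orP[] /memE' [m [p [q [E [[H1 H2]|[H1 H2]]]]]] //.
- case: H1 => ->; case: H2 => ->; exists p, q; by split => //; left.
- case: H1 => ->; case: H2 => ->; exists p, q; by split => //; right.
Qed.

Lemma adj_rl {R : realFieldType} {T : eqType} (zeta : R) (G : wdigraph T R) a n :
  adj (G' zeta G) (inr n) (inl a) ->
  exists p q, ed G n = Some (p, q) /\ (a = p \/ a = q).
Proof. by rewrite adjC; apply: adj_lr. Qed.

Lemma adj_mk1 {R : realFieldType} {T : eqType} (zeta : R) (G : wdigraph T R) n p q :
  ed G n = Some (p, q) -> adj (G' zeta G) (inl p) (inr n).
Proof.
move=> E; rewrite /adj; apply/orP; left; apply/memE'; exists n, p, q; split => //; by left.
Qed.

Lemma adj_mk2 {R : realFieldType} {T : eqType} (zeta : R) (G : wdigraph T R) n p q :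
  ed G n = Some (p, q) -> adj (G' zeta G) (inr n) (inl q).
Proof.
move=> E; rewrite /adj; apply/orP; left; apply/memE'; exists n, p, q; split => //; by right.
Qed.

Lemma ed_neq {R : realFieldType} {T : eqType} {G : wdigraph T R} {n p q} :
  wf G -> ed G n = Some (p, q) -> p != q.
Proof. by move=> Hwf E; have [] := Hwf _ _ (ed_mem E). Qed.

Lemma notE1 {R : realFieldType} {T : eqType} (zeta : R) {G : wdigraph T R} {n p q} :
  wf G -> ed G n = Some (p, q) -> (inl q, inr n) \notin wedges (G' zeta G).
Proof.
move=> Hwf E; apply/negP => /memE' [m [p' [q' [E' [[H1 H2]|[H1 H2]]]]]] //.
case: H1 => H1; case: H2 => H2; subst m; rewrite E in E'; case: E' => Hp Hq.
by move: (ed_neq Hwf E); rewrite H1 Hp eqxx.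
Qed.

Lemma notE2 {R : realFieldType} {T : eqType} (zeta : R) {G : wdigraph T R} {n p q} :
  wf G -> ed G n = Some (p, q) -> (inr n, inl p) \notin wedges (G' zeta G).
Proof.
move=> Hwf E; apply/negP => /memE' [m [p' [q' [E' [[H1 H2]|[H1 H2]]]]]] //.
case: H1 => H1; case: H2 => H2; subst m; rewrite E in E'; case: E' => Hp Hq.
by move: (ed_neq Hwf E); rewrite H2 -Hq eqxx.
Qed.

Lemma h1 {R : realFieldType} {T : eqType} (zeta : R) {G : wdigraph T R} {n p q} :
  ed G n = Some (p, q) -> hext (G' zeta G) (inl p) (inr n) = wgt G (p, q) + cw zeta n.
Proof.
move=> E; rewrite /hext.
have -> : (inl p, inr n) \in wedges (G' zeta G).
  by apply/memE'; exists n, p, q; split => //; left.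
by rewrite /= E.
Qed.

Lemma h2 {R : realFieldType} {T : eqType} (zeta : R) {G : wdigraph T R} {n p q} :
  ed G n = Some (p, q) -> hext (G' zeta G) (inr n) (inl q) = 0.
Proof.
move=> E; rewrite /hext.
have -> : (inr n, inl q) \in wedges (G' zeta G).
  by apply/memE'; exists n, p, q; split => //; right.
by [].
Qed.

Lemma h3 {R : realFieldType} {T : eqType} (zeta : R) {G : wdigraph T R} {n p q} :
  wf G -> ed G n = Some (p, q) -> hext (G' zeta G) (inl q) (inr n) = 1.
Proof.
move=> Hwf E; rewrite /hext (negbTE (notE1 zeta Hwf E)) /=; ring.
Qed.

Lemma h4 {R : realFieldType} {T : eqType} (zeta : R) {G : wdigraph T R} {n p q} :
  wf G -> ed G n = Some (p, q) ->
  hext (G' zeta G) (inr n) (inl p) = 1 - wgt G (p, q) - cw zeta n.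
Proof.
move=> Hwf E; rewrite /hext (negbTE (notE2 zeta Hwf E)) /= E; ring.
Qed.

Lemma hG1 {R : realFieldType} {T : eqType} {G : wdigraph T R} {p q} :
  (p, q) \in wedges G -> hext G p q = wgt G (p, q).
Proof. by move=> E; rewrite /hext E. Qed.

Lemma hG2 {R : realFieldType} {T : eqType} {G : wdigraph T R} {p q} :
  wf G -> (p, q) \in wedges G -> hext G q p = 1 - wgt G (p, q).
Proof. by move=> Hwf E; have [_ _ _ N] := Hwf _ _ E; rewrite /hext (negbTE N). Qed.

Lemma twostep {R : realFieldType} {T : eqType} (zeta : R) (G : wdigraph T R) a n b :
  0 < zeta -> wf G ->
  adj (G' zeta G) (inl a) (inr n) -> adj (G' zeta G) (inr n) (inl b) -> a != b ->
  adj G a b /\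
  0 < hext (G' zeta G) (inl a) (inr n) + hext (G' zeta G) (inr n) (inl b) - hext G a b < 1.
Proof.
move=> Hz Hwf /adj_lr [p [q [E Ha]]] /adj_rl [p' [q' [E' Hb]]] Hab.
rewrite E in E'; case: E' => ? ?; subst p' q'.
have Hm := ed_mem E.
have /andP[c0 c1] := @cw_bounds _ zeta n Hz.
case: Ha => ?; case: Hb => ?; subst; rewrite ?eqxx // in Hab.
- split; first by rewrite /adj Hm.
  rewrite (h1 _ E) (h2 _ E) (hG1 Hm); apply/andP; split; lra.
- split; first by rewrite /adj Hm orbT.
  rewrite (h3 _ Hwf E) (h4 _ Hwf E) (hG2 Hwf Hm); apply/andP; split; lra.
Qed.

Definition getl {T : Type} (x : T + nat) : option T :=
  if x is inl a then Some a else None.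

Lemma mem_getl {T : eqType} (s : seq (T + nat)) a : (a \in pmap getl s) = (inl a \in s).
Proof. by apply: can2_mem_pmap => [[]|]. Qed.

Lemma walk {R : realFieldType} {T : eqType} (zeta : R) (G : wdigraph T R) :
  0 < zeta -> wf G -> forall k s a b, (size s <= k)%N ->
  uniq (inl a :: s) -> path (adj (G' zeta G)) (inl a) s -> last (inl a) s = inl b ->
  [/\ size s = (size (pmap getl s)).*2, uniq (a :: pmap getl s),
      path (adj G) a (pmap getl s), last a (pmap getl s) = b &
      s = [::] \/ 0 < pathW (G' zeta G) (inl a) s - pathW G a (pmap getl s)
                    < (size (pmap getl s))%:R].
Proof.
move=> Hz Hwf; elim=> [|k IH] s a b.
  rewrite leqn0 => /nilP -> _ _ /= [->]; split => //; by left.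
case: s => [|u s1] Hk Hu Hp Hl.
  move: Hl => /= [->]; split => //; by left.
case: u Hk Hu Hp Hl => [u|m] Hk Hu Hp Hl.
  by move: Hp => /= /andP[]; rewrite adj_ll.
case: s1 Hk Hu Hp Hl => [|w s2] Hk Hu Hp Hl; first by [].
case: w Hk Hu Hp Hl => [w|j] Hk Hu Hp Hl; last first.
  by move: Hp => /= /andP[_ /andP[]]; rewrite adj_rr.
move: Hp => /= /andP[Ham /andP[Hmw Hp2]].
move: Hu; rewrite /= !inE !negb_or => /andP[/and3P[_ Haw Has2] /andP[_ Hu2]].
have Hu2' : uniq (inl w :: s2) by [].
have Haw' : a != w by apply: contra Haw => /eqP ->.
have [Hsz U P L D] := IH s2 w b (ltnSE (ltnW Hk)) Hu2' Hp2 Hl.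
have [Hadj /andP[d0 d1]] := @twostep _ _ zeta G a m w Hz Hwf Ham Hmw Haw'.
split.
- by rewrite /= Hsz doubleS.
- have /andP[U1 U2] : (w \notin pmap getl s2) && uniq (pmap getl s2) := U.
  by rewrite U1 U2 Haw' mem_getl Has2.
- by rewrite /= Hadj P.
- by [].
right; rewrite !pathW_cons /=.
case: D => [Hs2|/andP[e0 e1]].
  subst s2; rewrite /= !pathW_nil; apply/andP; split; lra.
rewrite -addn1 natrD; apply/andP; split; lra.
Qed.

Lemma walk' {R : realFieldType} {T : eqType} {zeta : R} {G : wdigraph T R} {s a b} :
  0 < zeta -> wf G ->
  uniq (inl a :: s) -> path (adj (G' zeta G)) (inl a) s -> last (inl a) s = inl b ->
  [/\ size s = (size (pmap getl s)).*2, uniq (a :: pmap getl s),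
      path (adj G) a (pmap getl s), last a (pmap getl s) = b &
      s = [::] \/ 0 < pathW (G' zeta G) (inl a) s - pathW G a (pmap getl s)
                    < (size (pmap getl s))%:R].
Proof. move=> Hz Hwf; exact: (@walk _ _ zeta G Hz Hwf _ s a b (leqnn _)). Qed.

Lemma lowerW {R : realFieldType} {T : eqType} (zeta : R) (G : wdigraph T R) s a b :
  0 < zeta -> wf G -> curl_consistent G -> adj G a b -> a != b ->
  is_path (G' zeta G) (inl a) (inl b) s -> hext G a b < pathW (G' zeta G) (inl a) s.
Proof.
move=> Hz Hwf Hcc Hab Hne /and3P[Hu Hp /eqP Hl].
have [_ U P L D] := walk' Hz Hwf Hu Hp Hl.
case: D => [Hs|/andP[d0 d1]].
  by subst s; move: Hl => /= [] E; rewrite E eqxx in Hne.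
move: (pmap getl s) U P L d0 d1 => sG U P L d0 d1.
case: sG U P L d0 d1 => [|x [|y t]] U P L d0 d1.
- by move: L => /= E; rewrite E eqxx in Hne.
- move: L d0 => /= <-; rewrite pathW_cons pathW_nil; lra.
- have Hc : is_wcycle G (a :: [:: x, y & t]).
    apply/and3P; split => //.
    change (path (adj G) a (rcons [:: x, y & t] a)); rewrite rcons_path P L adjC //.
  have /andP[c1 _] := Hcc _ Hc.
  move: c1; rewrite curl_cons L.
  have := hext_sum Hwf Hab; lra.
Qed.

Lemma cc_inl {R : realFieldType} {T : eqType} (zeta : R) (G : wdigraph T R) a r :
  0 < zeta -> wf G -> curl_consistent G ->
  is_wcycle (G' zeta G) (inl a :: r) ->
  1 < curl (G' zeta G) (inl a :: r) < (size (inl a :: r))%:R - 1.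
Proof.
move=> Hz Hwf Hcc /and3P[Hs Hu Hc].
case/lastP: r Hs Hu Hc => [|r' y] Hs Hu Hc; first by [].
have Hc' : path (adj (G' zeta G)) (inl a) (rcons (rcons r' y) (inl a)) := Hc.
move: Hc'; rewrite rcons_path last_rcons rcons_path => /andP[/andP[Hp Hly] Hya].
clear Hc; case: y Hs Hu Hly Hya => [y|n] Hs Hu Hly Hya; first by rewrite adj_ll in Hya.
case Hl: (last (inl a) r') Hly => [b|k] Hly; last by rewrite adj_rr in Hly.
have Hu' : uniq (inl a :: r').
  by move: Hu; rewrite -rcons_cons rcons_uniq => /andP[].
have Hr'0 : r' != [::].
  by apply/eqP => E; subst r'.
have Hab : b != a.
  apply/eqP => E; subst b.
  have Hin : inl a \in r'.
    by rewrite -Hl; case: (r') Hr'0 => [|x r''] //= _; exact: mem_last.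
  by move: Hu'; rewrite /= Hin.
have [Hsz U P L D] := walk' Hz Hwf Hu' Hp Hl.
have [HadjG /andP[e0 e1]] := @twostep _ _ zeta G b n a Hz Hwf Hly Hya Hab.
case: D => [E|/andP[d0 d1]]; first by rewrite E in Hr'0.
have -> : curl (G' zeta G) (inl a :: rcons r' (inr n)) =
   pathW (G' zeta G) (inl a) r' + hext (G' zeta G) (inl b) (inr n)
     + hext (G' zeta G) (inr n) (inl a).
  by rewrite curl_cons last_rcons pathW_rcons Hl.
have -> : (size (inl a :: rcons r' (inr n)))%:R = 2 * (size (pmap getl r'))%:R + 2 :> R.
  rewrite /= size_rcons Hsz -addn2 -muln2 natrD natrM /=; ring.
move: (pmap getl r') Hsz U P L d0 d1 => sG Hsz U P L d0 d1.
case: sG Hsz U P L d0 d1 => [|x [|y t]] Hsz U P L d0 d1.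
- by move: Hsz Hr'0 => /= /eqP; rewrite size_eq0 => /eqP ->.
- move: L P d0 d1 e0 e1 => /= <- /andP[Hax _].
  have := hext_sum Hwf Hax.
  rewrite pathW_cons pathW_nil /=; move=> Hs1 d0 d1 e0 e1.
  apply/andP; split; lra.
- have Hc2 : is_wcycle G (a :: [:: x, y & t]).
    apply/and3P; split => //.
    change (path (adj G) a (rcons [:: x, y & t] a)); rewrite rcons_path P L //.
  have /andP[c1 c2] := Hcc _ Hc2.
  move: c1 c2; rewrite curl_cons L.
  move: d1; set m := size _.
  rewrite /= in m *.
  have -> : (size [:: a, x, y & t])%:R = (size [:: x, y & t])%:R + 1 :> R.
    by rewrite /= -addn1 natrD.
  move=> d1 c1 c2; apply/andP; split; lra.
Qed.

Lemma ccG' {R : realFieldType} {T : eqType} (zeta : R) (G : wdigraph T R) :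
  0 < zeta -> wf G -> curl_consistent G -> curl_consistent (G' zeta G).
Proof.
move=> Hz Hwf Hcc [|u r] Hc; first by case/and3P: Hc.
case: u Hc => [a|n] Hc; first exact: cc_inl.
case: r Hc => [|w r2] Hc; first by case/and3P: Hc.
have Hw : adj (G' zeta G) (inr n) w.
  by case/and3P: Hc => _ _ /= /andP[].
case: w Hc Hw => [w|k] Hc Hw; last by rewrite adj_rr in Hw.
have Hc2 : is_wcycle (G' zeta G) (inl w :: rcons r2 (inr n)).
  have := Hc; rewrite /is_wcycle -(size_rot 1) -(rot_uniq 1) -(rot_cycle 1).
  by rewrite rot1_cons.
have := @cc_inl _ _ zeta G _ _ Hz Hwf Hcc Hc2.
rewrite /= size_rcons !curl_cons pathW_rcons last_rcons !pathW_cons /=.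
move=> /andP[c1 c2]; apply/andP; split; lra.
Qed.

Theorem lemma4 (R : realFieldType) (T : eqType) (zeta : R) (G : wdigraph T R) :
  0 < zeta -> wf G -> curl_consistent G ->
  exists (G' : wdigraph (T + nat)%type R) (Y' : seq (T + nat)%type),
    [/\ wf G',
        [/\
        (forall v, (v \in wverts G') = (v \in map inl (wverts G)) || (v \in Y')),
        (forall v, v \in Y' -> v \notin map inl (wverts G)) &
        (forall e, e \in wedges G -> (inl e.1, inl e.2) \notin wedges G')],
        (forall e, e \in wedges G ->
           [/\ synth_defined G' (inl e.1) (inl e.2),
               zeta_accurate G' (inl e.1) (inl e.2) zeta &
               in_bound_interval G' (inl e.1) (inl e.2) (wgt G e)])
      & curl_consistent G'].
Proof.
move=> Hz Hwf Hcc.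
exists (G' zeta G), (Y' G).
have HwfG' : wf (G' zeta G).
  move=> u v /memE' [n [p [q [E [[-> ->]|[-> ->]]]]]].
  - have [_ Hp _ _] := Hwf _ _ (ed_mem E).
    split => //.
    + by rewrite /= mem_cat (map_f _ Hp).
    + rewrite /= mem_cat; apply/orP; right; apply: map_f.
      by rewrite mem_iota add0n (ed_lt E).
    + exact: (notE2 zeta Hwf E).
  - have [_ _ Hq _] := Hwf _ _ (ed_mem E).
    split => //.
    + rewrite /= mem_cat; apply/orP; right; apply: map_f.
      by rewrite mem_iota add0n (ed_lt E).
    + by rewrite /= mem_cat (map_f _ Hq).
    + exact: (notE1 zeta Hwf E).
split => //.
- split.
  + by move=> v; rewrite /= mem_cat.
  + move=> v /mapP [n _ ->]; apply/negP => /mapP [x _] //.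
  + move=> e _; apply/negP => /memE' [n [p [q [_ [[_ H]|[H _]]]]]] //.
- move=> [p q] Hpq /=.
  have [Hne _ _ _] := Hwf _ _ Hpq.
  set j := index (p, q) (wedges G).
  have Ej : onth (wedges G) j = Some (p, q).
    by rewrite onthE (nth_map (p, q)) ?index_mem // nth_index.
  have E0 : ed G j.*2 = Some (p, q) by rewrite /ed doubleK.
  have E1 : ed G j.*2.+1 = Some (p, q).
    by rewrite /ed -[(j.*2.+1)./2]/(uphalf j.*2) uphalf_double.
  have P0 : is_path (G' zeta G) (inl p) (inl q) [:: inr j.*2; inl q].
    rewrite /is_path /= (adj_mk1 zeta G _ _ _ E0) (adj_mk2 zeta G _ _ _ E0) eqxx !inE !andbT.
    by apply/orP => -[] // /eqP [] /eqP; apply/negP.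
  have P1 : is_path (G' zeta G) (inl q) (inl p) [:: inr j.*2.+1; inl p].
    rewrite /is_path /= adjC (adj_mk2 zeta G _ _ _ E1) adjC (adj_mk1 zeta G _ _ _ E1) eqxx !inE !andbT.
    by apply/orP => -[] // /eqP [] /eqP; rewrite eq_sym; apply/negP.
  have W0 : pathW (G' zeta G) (inl p) [:: inr j.*2; inl q] = wgt G (p, q) + eps zeta.
    by rewrite !pathW_cons pathW_nil (h1 zeta E0) (h2 zeta E0) /cw odd_double addr0 addr0.
  have W1 : pathW (G' zeta G) (inl q) [:: inr j.*2.+1; inl p] = 1 - wgt G (p, q) + eps zeta.
    rewrite !pathW_cons pathW_nil (h3 zeta Hwf E1) (h4 zeta Hwf E1) /cw /= odd_double /=.
    ring.
  have [U HU] := @min_exists _ _ _ _ _ _ HwfG' P0.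
  have [M HM] := @min_exists _ _ _ _ _ _ HwfG' P1.
  have HadjG : adj G p q by rewrite /adj Hpq.
  split.
  + by rewrite /synth_defined adj_ll.
  + exists U, M; split => //.
    have := (proj2 HU) _ P0; have := (proj2 HM) _ P1.
    have := @eps_bounds _ zeta Hz; rewrite W0 W1; lra.
  + exists U, M; split => //.
    case: HU => [[s [Hs <-]] _]; case: HM => [[s' [Hs' <-]] _].
    have L0 := @lowerW _ _ zeta G _ _ _ Hz Hwf Hcc HadjG Hne Hs.
    have HadjG' : adj G q p by rewrite adjC.
    have Hne' : q != p by rewrite eq_sym.
    have L1 := @lowerW _ _ zeta G _ _ _ Hz Hwf Hcc HadjG' Hne' Hs'.
    move: L0 L1; rewrite (hG1 Hpq) (hG2 Hwf Hpq) => L0 L1.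
    apply/andP; split; lra.
- exact: ccG'.
Qed.
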